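(* Let $\mathcal{A}$ be a finite alphabet, $\mathbf{p}=(p_0,p_1)$ an irreducible pair on $\mathcal{A}$, and $\mathbf{q}=(p_1,p_0)$. Then $\mathcal{S}(\mathbf{q})=\mathcal{S}(\mathbf{p})^{-1}$.
   Context: Let $n=\#\mathcal{A}$. A pair is $\mathbf{p}=(p_0,p_1)$ with $p_0,p_1:\mathcal{A}\to\{1,\dots,n\}$ bijections; it is irreducible if $p_0^{-1}\{1,\dots,k\}\ne p_1^{-1}\{1,\dots,k\}$ for $1\le k<n$ (so $(p_1,p_0)$ is irreducible whenever $(p_0,p_1)$ is). For irreducible $\mathbf{p}$, $\mathcal{S}(\mathbf{p}):\mathcal{A}\to\mathcal{A}$ is defined by $\mathcal{S}(\mathbf{p})(\alpha)=p_0^{-1}(1)$ if $p_1(\alpha)=1$; $=p_0^{-1}(p_0(p_1^{-1}(n))+1)$ if $p_1(\alpha)=p_1(p_0^{-1}(n))+1$; $=p_0^{-1}(p_0(p_1^{-1}(p_1(\alpha)-1))+1)$ otherwise. It is a permutation of $\mathcal{A}$. *)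

(* Defs.v *)
From mathcomp Require Import all_boot.
Set Implicit Arguments. Unset Strict Implicit. Unset Printing Implicit Defensive.

(* Positions are 1-based naturals in {1, ..., n}, n = #|A|, as in the paper. *)
Definition is_pos_bij (A : finType) (p : A -> nat) : Prop :=
  injective p /\ forall a, 1 <= p a <= #|A|.

Definition is_pair (A : finType) (p0 p1 : A -> nat) : Prop :=
  is_pos_bij p0 /\ is_pos_bij p1.

Definition irreducible (A : finType) (p0 p1 : A -> nat) : Prop :=
  forall k, 1 <= k < #|A| ->
    [set a | p0 a <= k] != [set a | p1 a <= k].

(* p^{-1}(k), with a default value d used only if k is not in the range *)
Definition pinv (A : finType) (p : A -> nat) (d : A) (k : nat) : A :=
  odflt d [pick a | p a == k].

Definition Smap (A : finType) (p0 p1 : A -> nat) (alpha : A) : A :=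
  let n := #|A| in
  let inv0 := pinv p0 alpha in
  let inv1 := pinv p1 alpha in
  if p1 alpha == 1 then inv0 1
  else if p1 alpha == (p1 (inv0 n)).+1 then inv0 (p0 (inv1 n)).+1
  else inv0 (p0 (inv1 (p1 alpha).-1)).+1.

(* Main.v *)
Require Import Defs.
From mathcomp Require Import all_boot.
From mathcomp Require Import zify.

Section Aux.
Variable A : finType.

Lemma pos_surj (p : A -> nat) : is_pos_bij p ->
  forall k, 1 <= k <= #|A| -> exists a, p a == k.
Proof.
move=> [inj rg] k /andP[k1 kn].
have lt a : (p a).-1 < #|A|.
  by have /andP[? ?] := rg a; lia.
pose g a := Ordinal (lt a).
have ginj : injective g.
  move=> a b /(congr1 val) /= e; apply: inj.
  by have /andP[? ?] := rg a; have /andP[? ?] := rg b; lia.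
have kl : k.-1 < #|A| by lia.
have cc : #|'I_#|A| | <= #|A| by rewrite card_ord.
have := inj_card_onto ginj cc (Ordinal kl).
case/codomP => x /(congr1 val) /= e; exists x.
by have /andP[? ?] := rg x; apply/eqP; lia.
Qed.

Lemma pinvK (p : A -> nat) d k : is_pos_bij p -> 1 <= k <= #|A| -> p (pinv p d k) = k.
Proof.
move=> hp hk; rewrite /pinv; case: pickP => [x /eqP //| H].
by case: (@pos_surj p hp k hk) => a; rewrite H.
Qed.

Lemma pinv_p (p : A -> nat) d a : is_pos_bij p -> pinv p d (p a) = a.
Proof.
move=> hp; apply: hp.1; apply: pinvK => //; exact: hp.2.
Qed.

Lemma last_neq (p0 p1 : A -> nat) d d' : is_pair p0 p1 -> irreducible p0 p1 ->
  2 <= #|A| -> pinv p0 d #|A| != pinv p1 d' #|A|.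
Proof.
move=> [h0 h1] hirr n2; apply/eqP => e.
have n1 : 1 <= #|A| <= #|A| by apply/andP; split; lia.
have k1 : 1 <= #|A|.-1 < #|A| by apply/andP; split; lia.
move: (hirr _ k1) => /eqP; apply; apply/setP => a; rewrite !inE.
have /andP[? ?] := h0.2 a; have /andP[? ?] := h1.2 a.
have e0 := @pinvK p0 d _ h0 n1; have e1 := @pinvK p1 d' _ h1 n1.
case: (eqVneq a (pinv p0 d #|A|)) => [->|ne].
  by rewrite {2}e e0 e1; lia.
have : p0 a != #|A| by apply: contra ne => /eqP <-; rewrite pinv_p.
have : p1 a != #|A| by rewrite e in ne; apply: contra ne => /eqP <-; rewrite pinv_p.
lia.
Qed.
End Aux.

Lemma pinv_d (A : finType) (p : A -> nat) d d' k : is_pos_bij p -> 1 <= k <= #|A| ->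
  pinv p d k = pinv p d' k.
Proof. by move=> hp hk; apply: hp.1; rewrite !pinvK. Qed.

Lemma Smap_cancel (A : finType) (p0 p1 : A -> nat) :
  is_pair p0 p1 -> irreducible p0 p1 -> cancel (Smap p0 p1) (Smap p1 p0).
Proof.
move=> hp hirr; have [h0 h1] := hp.
move=> x.
have /andP[x1 xn] := h1.2 x.
have r0 a := h0.2 a; have r1 a := h1.2 a.
set n := #|A|.
set y := Smap p0 p1 x.
have n1 : 1 <= n <= n by apply/andP; split; lia.
have Ld : 1 < n -> pinv p0 x n != pinv p1 x n := @last_neq A p0 p1 x x hp hirr.
case: (eqVneq (p1 x) 1) => [j1 | jn1].
  have ey : y = pinv p0 x 1 by rewrite /y /Smap j1.
  have e : p0 y = 1 by rewrite ey; apply: pinvK => //; apply/andP; split; lia.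
  by rewrite /Smap e eqxx -j1 pinv_p.
case: (eqVneq (p1 x) (p1 (pinv p0 x n)).+1) => [j2 | jn2].
  have /andP[? ?] := r1 (pinv p0 x n).
  have n2 : 2 <= n by lia.
  have ne := Ld n2.
  have /andP[? ?] := r0 (pinv p1 x n).
  have ne' : p0 (pinv p1 x n) != n.
    by apply: contra ne => /eqP e; rewrite -{1}e pinv_p.
  have ey : y = pinv p0 x (p0 (pinv p1 x n)).+1 by rewrite /y /Smap (negbTE jn1) j2 eqxx.
  have e : p0 y = (p0 (pinv p1 x n)).+1.
    by rewrite ey; apply: pinvK => //; apply/andP; split; lia.
  have d1 : pinv p1 y n = pinv p1 x n by apply: pinv_d.
  have d0 : pinv p0 y n = pinv p0 x n by apply: pinv_d.
  rewrite /Smap e /= d1 eqxx -/n d0 -j2 pinv_p //.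
  by case: ifP => // /eqP; lia.
have ey : y = pinv p0 x (p0 (pinv p1 x (p1 x).-1)).+1
  by rewrite /y /Smap (negbTE jn1) (negbTE jn2).
have k1 : 1 <= (p1 x).-1 <= n by apply/andP; split; lia.
have ek := @pinvK A p1 x _ h1 k1.
have /andP[? ?] := r0 (pinv p1 x (p1 x).-1).
have ne' : p0 (pinv p1 x (p1 x).-1) != n.
  apply: contra jn2 => /eqP e; rewrite -{1}e pinv_p // ek; lia.
have e : p0 y = (p0 (pinv p1 x (p1 x).-1)).+1.
  by rewrite ey; apply: pinvK => //; apply/andP; split; lia.
have ne2 : p0 (pinv p1 x (p1 x).-1) != p0 (pinv p1 y n).
  apply/eqP => /h0.1 e2; have := congr1 p1 e2; rewrite ek pinvK //; lia.
have d2 : pinv p0 y (p0 (pinv p1 x (p1 x).-1)) = pinv p1 x (p1 x).-1 by apply: pinv_p.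
rewrite /Smap e /= -/n.
have -> : ((p0 (pinv p1 x (p1 x).-1)).+1 == 1) = false by lia.
rewrite eqSS (negbTE ne2) d2 ek.
have -> : ((p1 x).-1).+1 = p1 x by lia.
by rewrite pinv_p.
Qed.

Lemma is_pair_sym (A : finType) (p0 p1 : A -> nat) : is_pair p0 p1 -> is_pair p1 p0.
Proof. by case. Qed.

Lemma irr_sym (A : finType) (p0 p1 : A -> nat) : irreducible p0 p1 -> irreducible p1 p0.
Proof. by move=> h k hk; rewrite eq_sym; apply: h. Qed.

Theorem lemma2p9 (A : finType) (p0 p1 : A -> nat) :
  is_pair p0 p1 -> irreducible p0 p1 ->
  cancel (Smap p0 p1) (Smap p1 p0) /\ cancel (Smap p1 p0) (Smap p0 p1).
Proof.
move=> hp hi; split; apply: Smap_cancel => //.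
  exact: is_pair_sym.
exact: irr_sym.
Qed.
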